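(* There exist universal constants $C,C'>0$ such that for every $m>0$, every $\beta\in(0,1/3)$, every $\epsilon\in(0,1)$, every odd $n\in\mathbb{N}$ with $n\epsilon\ge C\ln(1/\beta)$, and every $D\in\mathcal{CTM}$, setting $\alpha^*=1/(n\epsilon)$, with probability at least $1-\beta$, $$\mathrm{FAIR}(D,\mathtt{DPExpMed}_{\alpha^*}(D))\le C'\frac{m}{n\epsilon}\ln\frac1\beta.$$
   Context: $V=[-m/2,m/2]$. A dataset is $D=(x_1,\dots,x_n)\in V^n$, indexed so that $x_1\le\dots\le x_n$, with median (optimal location) $\mathcal{T}(D)=x_{\lceil n/2\rceil}$. $\mathrm{FAIR}(D,\ell)=\max_{1\le i\le n}\left(|x_i-\ell|-|x_i-\mathcal{T}(D)|\right)$ (maximum individual utility loss when agent utilities are $-|x_i-\ell|$). $\mathcal{CTM}$ is the set of datasets with $|x_{i+1}-x_i|\ge|x_{j+1}-x_j|$ for all $1\le i<j\le\lceil n/2\rceil-1$ and $|x_i-x_{i-1}|\ge|x_j-x_{j-1}|$ for all $\lceil n/2\rceil+1\le j<i\le n$. The percentile loss $q(D,a)$ for $a\in V$ is: $\min\{|\lceil n/2\rceil-i|: a\in[x_i,\mathcal{T}(D)]\}$ if $a\in[x_1,\mathcal{T}(D)]$; $\min\{|\lceil n/2\rceil-i|: a\in[\mathcal{T}(D),x_i]\}$ if $a\in(\mathcal{T}(D),x_n]$; $\lceil n/2\rceil$ otherwise. The widened loss is $p_\alpha(D,\ell)=\min_{a\in V:|a-\ell|\le\alpha m}q(D,a)$.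 $\mathtt{DPExpMed}_\alpha(D)$ is the random point of $V$ with density proportional to $\exp(-\frac{\epsilon}{2}p_\alpha(D,\ell))$. *)

(* Defs.v *)
From mathcomp Require Import all_boot all_order all_algebra.
From mathcomp Require Import all_classical all_reals all_analysis.
Set Implicit Arguments. Unset Strict Implicit. Unset Printing Implicit Defensive.
Import Order.TTheory GRing.Theory Num.Theory.
Local Open Scope classical_set_scope.
Local Open Scope ring_scope.

(* A dataset D = (x_1,...,x_n) is represented by x : nat -> R together with n;
   only the values x 1, ..., x n are meaningful (1-based indexing as in the paper). *)

Section Defs.
Variable R : realType.

Definition Vset (m : R) : set R := [set l | - (m / 2) <= l <= m / 2].

Definition midx (n : nat) : nat := uphalf n.

Definition Tmed (x : nat -> R) (n : nat) : R := x (midx n).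

(* FAIR(D, l) = max_{1<=i<=n} (|x_i - l| - |x_i - T(D)|).
   The seed 0 is harmless: the term i = ceil(n/2) is >= 0. *)
Definition FAIR (x : nat -> R) (n : nat) (l : R) : R :=
  \big[Num.max/0]_(1 <= i < n.+1) (`|x i - l| - `|x i - Tmed x n|).

Definition sorted_data (x : nat -> R) (n : nat) : Prop :=
  forall i, (1 <= i)%N -> (i < n)%N -> x i <= x i.+1.

Definition data_in_V (m : R) (x : nat -> R) (n : nat) : Prop :=
  forall i, (1 <= i <= n)%N -> Vset m (x i).

Definition CTM (x : nat -> R) (n : nat) : Prop :=
  (forall i j, (1 <= i)%N -> (i < j)%N -> (j <= midx n - 1)%N ->
      `|x j.+1 - x j| <= `|x i.+1 - x i|) /\
  (forall i j, (midx n + 1 <= j)%N -> (j < i)%N -> (i <= n)%N ->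
      `|x j - x j.-1| <= `|x i - x i.-1|).

Definition distn (a b : nat) : nat := (a - b) + (b - a).

(* percentile loss q(D, a).  The minima are over nonempty finite sets of
   naturals bounded by ceil(n/2), so the seed ceil(n/2) does not alter them. *)
Definition qloss (x : nat -> R) (n : nat) (a : R) : nat :=
  if (x 1 <= a) && (a <= Tmed x n) then
    \big[minn/midx n]_(1 <= i < n.+1 | (x i <= a) && (a <= Tmed x n)) distn (midx n) i
  else if (Tmed x n < a) && (a <= x n) then
    \big[minn/midx n]_(1 <= i < n.+1 | (Tmed x n <= a) && (a <= x i)) distn (midx n) i
  else midx n.

(* widened loss p_alpha(D, l) = min_{a in V, |a - l| <= alpha m} q(D, a)
   (a minimum of naturals, written as an infimum in R). *)
Definition ploss (m alpha : R) (x : nat -> R) (n : nat) (l : R) : R :=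
  inf [set ((qloss x n a)%:R : R) | a in [set a | Vset m a /\ `|a - l| <= alpha * m]].

Definition expmed_weight (m eps alpha : R) (x : nat -> R) (n : nat) (l : R) : R :=
  expR (- (eps / 2) * ploss m alpha x n l).

(* Pr[DPExpMed_alpha(D) \in S] : density w.r.t. Lebesgue measure on V,
   proportional to exp(-eps/2 * p_alpha(D, l)). *)
Definition DPExpMed_prob (m eps alpha : R) (x : nat -> R) (n : nat) (S : set R) : R :=
  Rintegral lebesgue_measure (Vset m `&` S) (expmed_weight m eps alpha x n) /
  Rintegral lebesgue_measure (Vset m) (expmed_weight m eps alpha x n).

End Defs.

(* Main.v *)
Require Import Defs.
From mathcomp Require Import all_boot all_order all_algebra.
From mathcomp Require Import all_classical all_reals all_analysis.
From mathcomp Require Import measurable_realfun.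
From mathcomp Require Import zify ring lra.
Set Implicit Arguments. Unset Strict Implicit. Unset Printing Implicit Defensive.
Import Order.TTheory GRing.Theory Num.Theory.
Import numFieldTopology.Exports numFieldNormedType.Exports.
Local Open Scope classical_set_scope.
Local Open Scope ring_scope.
Ltac nlia := repeat match goal with
  | H : is_true (Order.le _ _) |- _ => clear H
  | H : is_true (Order.lt _ _) |- _ => clear H
  | H : @eq ?T _ _ |- _ => lazymatch T with nat => fail | _ => clear H end
  | H : forall _, _ |- _ => clear H
  end; lia.
Section Avg.
Variable R : realType.
Variables (y : nat -> R) (k : nat).
Let g i := y i.+1 - y i.
Hypothesis gapdec : forall i j, (1 <= i)%N -> (i < j)%N -> (j <= k - 1)%N -> g j <= g i.

Lemma avgL1 i0 : (1 <= i0)%N -> (i0 <= k - 1)%N ->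
  forall d, (i0 + d <= k)%N -> y k - y (k - d)%N <= d%:R * g i0.
Proof.
move=> h1 h2; elim=> [|d IH] hd.
  by rewrite subn0 subrr mul0r.
have e : (k - d)%N = (k - d.+1).+1 by nlia.
have -> : y k - y (k - d.+1)%N = (y k - y (k - d)%N) + g (k - d.+1)%N.
  by rewrite /g -e; ring.
rewrite -natr1 mulrDl mul1r; apply: lerD; first by apply: IH; nlia.
have [/eqP ->|hne] := boolP ((k - d.+1)%N == i0); first by [].
by apply: gapdec; nlia.
Qed.

Lemma avgL2 i0 : (i0 <= k - 1)%N ->
  forall d, (1 + d <= i0)%N -> d%:R * g i0 <= y (1 + d)%N - y 1%N.
Proof.
move=> h2; elim=> [|d IH] hd.
  by rewrite addn0 subrr mul0r.
have -> : y (1 + d.+1)%N - y 1%N = (y (1 + d)%N - y 1%N) + g (1 + d)%N.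
  by rewrite /g addnS; ring.
rewrite -natr1 mulrDl mul1r; apply: lerD; first by apply: IH; nlia.
by apply: gapdec; nlia.
Qed.

Hypothesis ysorted : forall i, (1 <= i)%N -> (i < k)%N -> y i <= y i.+1.

Lemma avg_main i : (1 <= i <= k)%N ->
  (k - 1)%:R * (y k - y i) <= (k - i)%:R * (y k - y 1%N).
Proof.
move=> /andP[h1 h2].
have [->|hlt] := eqVneq i k; first by rewrite subnn mul0r subrr mulr0.
have hik : (i < k)%N by rewrite ltn_neqAle hlt h2.
set a := (i - 1)%N; set d := (k - i)%N.
have ei : i = (1 + a)%N by rewrite /a; nlia.
have ek : (k - 1)%N = (a + d)%N by rewrite /a /d; nlia.
have L1 := @avgL1 i h1 ltac:(nlia) d ltac:(rewrite /d; nlia).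
have L2 := @avgL2 i ltac:(nlia) a ltac:(rewrite /a; nlia).
have ekd : (k - d)%N = i by rewrite /d; nlia.
rewrite ekd -ei in L1 L2.
have g0 : 0 <= g i by rewrite /g subr_ge0; apply: ysorted.
rewrite ek natrD mulrDl.
have H1 : a%:R * (y k - y i) <= d%:R * (y i - y 1%N).
  apply: (@le_trans _ _ (a%:R * (d%:R * g i))).
    by apply: ler_wpM2l => //.
  by rewrite mulrCA; apply: ler_wpM2l.
have -> : d%:R * (y k - y 1%N) = d%:R * (y i - y 1%N) + d%:R * (y k - y i) by ring.
by apply: lerD.
Qed.
End Avg.
Lemma midxE h : midx h.*2.+1 = h.+1.
Proof. by rewrite /midx /= doubleK. Qed.

Section Data.
Variable R : realType.
Variables (m : R) (x : nat -> R) (h : nat).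
Let n := h.*2.+1.
Hypothesis xV : data_in_V m x n.
Hypothesis xs : sorted_data x n.
Hypothesis xC : CTM x n.

Lemma xmono i j : (1 <= i)%N -> (i <= j)%N -> (j <= n)%N -> x i <= x j.
Proof.
move=> hi hij; elim: j hij => [|j IH]; first by nlia.
rewrite leq_eqVlt => /orP[/eqP <- //|hij] hjn.
apply: (le_trans (IH hij ltac:(nlia))); apply: xs; nlia.
Qed.

Lemma xVb i : (1 <= i)%N -> (i <= n)%N -> - (m / 2) <= x i /\ x i <= m / 2.
Proof. by move=> h1 h2; have /andP[] := @xV i ltac:(nlia). Qed.

Lemma left_bound i : (1 <= i <= h.+1)%N ->
  h%:R * (x h.+1 - x i) <= (h.+1 - i)%:R * m.
Proof.
move=> hi.
have := @avg_main R x h.+1 _ _ i hi.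
rewrite subn1 /= => H.
have H' : h%:R * (x h.+1 - x i) <= (h.+1 - i)%:R * (x h.+1 - x 1%N).
  apply: H.
  - move=> i0 j h1 h2 h3.
    have [C1 _] := xC; have := C1 i0 j h1 h2; rewrite /n midxE subn1 /= => /(_ h3).
    rewrite !ger0_norm ?subr_ge0 //; apply: xs; rewrite /n; nlia.
  - by move=> i0 h1 h2; apply: xs; rewrite /n; nlia.
apply: (le_trans H'); apply: ler_wpM2l => //.
have [_ a] := xVb (i:=h.+1) ltac:(nlia) ltac:(rewrite /n; nlia).
have [b _] := xVb (i:=1) ltac:(nlia) ltac:(rewrite /n; nlia).
lra.
Qed.

Lemma right_bound I : (h.+1 <= I <= n)%N ->
  h%:R * (x I - x h.+1) <= (I - h.+1)%:R * m.
Proof.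
move=> hI.
pose y i := - x (n.+1 - i)%N.
have H := @avg_main R y h.+1 _ _ (n.+1 - I)%N ltac:(rewrite /n; nlia).
rewrite subn1 /= in H.
have e1 : (n.+1 - (n.+1 - I))%N = I by rewrite /n; nlia.
have e2 : (n.+1 - h.+1)%N = h.+1 by rewrite /n; nlia.
have e3 : (h.+1 - (n.+1 - I))%N = (I - h.+1)%N by rewrite /n; nlia.
have e4 : (n.+1 - 1)%N = n by rewrite /n; nlia.
have H' : h%:R * (x I - x h.+1) <= (I - h.+1)%:R * (x n - x h.+1).
  have := H; rewrite /y e1 e2 e3 e4.
  have -> : - x h.+1 - - x I = x I - x h.+1 by ring.
  have -> : - x h.+1 - - x n = x n - x h.+1 by ring.
  apply.
  - move=> i0 j h1 h2 h3.
    have [_ C2] := xC.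
    have := C2 (n.+1 - i0)%N (n.+1 - j)%N.
    rewrite /n midxE.
    have e5 : ((h.*2.+1).+1 - j).-1 = ((h.*2.+1).+1 - j.+1)%N by nlia.
    have e6 : ((h.*2.+1).+1 - i0).-1 = ((h.*2.+1).+1 - i0.+1)%N by nlia.
    rewrite e5 e6 => /(_ ltac:(nlia) ltac:(nlia) ltac:(nlia)).
    rewrite !ger0_norm ?subr_ge0; first (by move=> hh; lra);
      apply: xmono; rewrite /n; nlia.
  - move=> i0 h1 h2; rewrite /y lerN2; apply: xmono; rewrite /n; nlia.
apply: (le_trans H'); apply: ler_wpM2l => //.
have [_ a] := xVb (i:=n) ltac:(rewrite /n; nlia) ltac:(rewrite /n; nlia).
have [b _] := xVb (i:=h.+1) ltac:(nlia) ltac:(rewrite /n; nlia).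
lra.
Qed.

End Data.
Lemma bigmin_le_term (r : seq nat) (P : pred nat) (F : nat -> nat) s i :
  i \in r -> P i -> (\big[minn/s]_(j <- r | P j) F j <= F i)%N.
Proof.
elim: r => [//|a r IH]; rewrite inE big_cons => /orP[/eqP <- ->|ir Pi].
  exact: geq_minl.
case: ifP => _; last exact: IH.
by rewrite geq_min IH ?orbT.
Qed.

Lemma bigmin_le_seed (r : seq nat) (P : pred nat) (F : nat -> nat) s :
  (\big[minn/s]_(j <- r | P j) F j <= s)%N.
Proof.
elim: r => [|a r IH]; first by rewrite big_nil.
rewrite big_cons; case: ifP => _ //; by rewrite geq_min IH orbT.
Qed.
Section Q.
Variable R : realType.
Variables (m : R) (x : nat -> R) (h : nat).
Let n := h.*2.+1.
Hypothesis xV : data_in_V m x n.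
Hypothesis xs : sorted_data x n.
Hypothesis xC : CTM x n.
Local Notation T := (x h.+1).

Lemma TV : - (m / 2) <= T /\ T <= m / 2.
Proof. by apply: (xVb xV); rewrite /n; nlia. Qed.

Lemma x1T : x 1%N <= T.
Proof. by apply: (xmono xs); rewrite /n; nlia. Qed.

Lemma Txn : T <= x n.
Proof. by apply: (xmono xs); rewrite /n; nlia. Qed.

Lemma qT : qloss x n T = 0%N.
Proof.
rewrite /qloss /Tmed /n midxE lexx x1T /=.
apply/eqP; rewrite -leqn0.
apply: (@leq_trans (distn h.+1 h.+1)); last by rewrite /distn; nlia.
apply: bigmin_le_term.
- by rewrite mem_index_iota; nlia.
- by rewrite lexx andbT.
Qed.

Lemma q_le_k a : (qloss x n a <= h.+1)%N.
Proof.
rewrite /qloss /Tmed /n midxE.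
case: ifP => _; first exact: bigmin_le_seed.
case: ifP => _; first exact: bigmin_le_seed.
by [].
Qed.

Lemma q_lower a : - (m / 2) <= a <= m / 2 ->
  h%:R * `|a - T| <= (qloss x n a)%:R * m.
Proof.
move=> /andP[a1 a2].
have [T1 T2] := TV.
have m0 : 0 <= m by lra.
have aT : `|a - T| <= m.
  by rewrite ler_norml; apply/andP; split; lra.
have seed : h%:R * `|a - T| <= h.+1%:R * m.
  rewrite -natr1 mulrDl mul1r; apply: (le_trans (ler_wpM2l (ler0n _ h) aT)); lra.
have Hmin : forall u v : nat, h%:R * `|a - T| <= u%:R * m ->
    h%:R * `|a - T| <= v%:R * m -> h%:R * `|a - T| <= (minn u v)%:R * m.
  by move=> u v hu hv; case: (leqP u v).
rewrite /qloss /Tmed /n midxE.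
case: ifP => [/andP[h1 h2]|_].
  rewrite big_nat_cond.
  apply: (big_ind (fun v : nat => h%:R * `|a - T| <= v%:R * m)) => //.
  move=> i /andP[/andP[i1 i2] /andP[xi _]].
  rewrite ler0_norm ?subr_le0 // opprB.
  have [ik|ik] := leqP i h.+1.
    have -> : distn h.+1 i = (h.+1 - i)%N by rewrite /distn; nlia.
    apply: (le_trans _ (left_bound xV xs xC (i:=i) ltac:(nlia))).
    by apply: ler_wpM2l => //; lra.
  have xiT : T <= x i by apply: (xmono xs) => //; rewrite /n in i2; nlia.
  apply: (@le_trans _ _ 0); last by apply: mulr_ge0.
  by rewrite mulr_ge0_le0 //; lra.
case: ifP => [/andP[h1 h2]|_] //.
rewrite big_nat_cond.
apply: (big_ind (fun v : nat => h%:R * `|a - T| <= v%:R * m)) => //.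
move=> i /andP[/andP[i1 i2] /andP[_ xi]].
rewrite gtr0_norm ?subr_gt0 //.
have [ik|ik] := leqP i h.+1.
  have : x i <= T by apply: (xmono xs) => //; rewrite /n; nlia.
  lra.
have -> : distn h.+1 i = (i - h.+1)%N by rewrite /distn; nlia.
apply: (le_trans _ (right_bound xV xs xC (I:=i) ltac:(rewrite /n in i2 *; nlia))).
by apply: ler_wpM2l => //; lra.
Qed.

Lemma q_monoL a a' : a <= a' -> a' <= T -> (qloss x n a' <= qloss x n a)%N.
Proof.
move=> aa aT.
have qa'k := q_le_k a'.
rewrite [X in (_ <= X)%N]/qloss /Tmed /n midxE.
case: ifP => [/andP[h1 h2]|_]; last first.
  by case: ifP => [/andP[h1 h2]|_ ]; [lra | exact: qa'k].
rewrite big_nat_cond.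
apply: (big_ind (fun v : nat => (qloss x n a' <= v)%N)) => //.
  by move=> u v hu hv; rewrite leq_min hu hv.
move=> i /andP[/andP[i1 i2] /andP[xi _]].
rewrite /qloss /Tmed /n midxE.
have -> : (x 1%N <= a') && (a' <= T) by apply/andP; split; lra.
apply: bigmin_le_term; first by rewrite mem_index_iota; nlia.
by apply/andP; split; lra.
Qed.

Lemma q_monoR a a' : a' <= a -> T <= a' -> (qloss x n a' <= qloss x n a)%N.
Proof.
move=> aa Ta.
have [->|Tlt] := eqVneq a' T; first by rewrite qT.
have Ta' : T < a' by rewrite lt_neqAle eq_sym Tlt Ta.
have qa'k := q_le_k a'.
rewrite [X in (_ <= X)%N]/qloss /Tmed /n midxE.
case: ifP => [/andP[h1 h2]|_]; first by lra.
case: ifP => [/andP[h1 h2]|_] //.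
rewrite big_nat_cond.
apply: (big_ind (fun v : nat => (qloss x n a' <= v)%N)) => //.
  by move=> u v hu hv; rewrite leq_min hu hv.
move=> i /andP[/andP[i1 i2] /andP[_ xi]].
rewrite /qloss /Tmed /n midxE.
have -> : (x 1%N <= a') && (a' <= T) = false.
  by apply/negbTE; rewrite negb_and -!ltNge Ta' orbT.
have -> : (T < a') && (a' <= x h.*2.+1) by apply/andP; split => //; have := Txn; rewrite /n; lra.
apply: bigmin_le_term; first by rewrite mem_index_iota; nlia.
by apply/andP; split; lra.
Qed.
End Q.
Section P.
Variable R : realType.
Variables (m alpha : R) (x : nat -> R) (h : nat).
Let n := h.*2.+1.
Hypothesis xV : data_in_V m x n.
Hypothesis xs : sorted_data x n.
Hypothesis xC : CTM x n.
Hypothesis m0 : 0 < m.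
Hypothesis al0 : 0 <= alpha.
Local Notation T := (x h.+1).
Local Notation W l := [set a | Vset m a /\ `|a - l| <= alpha * m].
Local Notation E l := [set ((qloss x n a)%:R : R) | a in W l].
Local Notation p := (ploss m alpha x n).

Lemma E_lb l : has_lbound (E l).
Proof. by exists 0 => _ [a _ <-]; rewrite ler0n. Qed.

Lemma p_le_q l a : Vset m a -> `|a - l| <= alpha * m -> p l <= (qloss x n a)%:R.
Proof. by move=> Va al; apply: ge_inf; [exact: E_lb | exists a]. Qed.

Lemma E_ne l : Vset m l -> E l !=set0.
Proof.
move=> Vl; exists (qloss x n l)%:R; exists l => //; split => //.
by rewrite subrr normr0 mulr_ge0 // ltW.
Qed.

Lemma TVs : Vset m T.
Proof. by have [a b] := TV xV; rewrite /Vset /= a b. Qed.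

Lemma p_zero l : `|T - l| <= alpha * m -> p l = 0.
Proof.
move=> Tl; apply/eqP; rewrite eq_le; apply/andP; split.
  by have := p_le_q TVs Tl; rewrite (qT xs).
apply: lb_le_inf; first by exists (qloss x n T)%:R; exists T => //; split => //; exact: TVs.
by move=> _ [a _ <-]; rewrite ler0n.
Qed.

Lemma p_ge0 l : Vset m l -> 0 <= p l.
Proof. by move=> Vl; apply: lb_le_inf; [exact: E_ne | move=> _ [a _ <-]; rewrite ler0n]. Qed.

Lemma p_lower l : Vset m l -> h%:R * (`|l - T| - alpha * m) / m <= p l.
Proof.
move=> Vl; apply: lb_le_inf; first exact: E_ne.
move=> _ [a [Va Wa] <-].
rewrite ler_pdivrMr //.
apply: le_trans (q_lower xV xs xC Va).
apply: ler_wpM2l => //.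
have := ler_distD a l T.
have : `|l - a| = `|a - l| by rewrite distrC.
lra.
Qed.

Lemma p_monoL l1 l2 : Vset m l1 -> l1 <= l2 -> l2 <= T -> p l2 <= p l1.
Proof.
move=> Vl1 l12 l2T.
apply: lb_le_inf; first exact: E_ne.
move=> _ [a [Va Wa] <-].
have /andP[a1 a2] := Va.
have [T1 T2] := TV xV.
case: (lerP (a + (l2 - l1)) T) => hT.
  apply: (@le_trans _ _ (qloss x n (a + (l2 - l1)))%:R).
    apply: p_le_q.
      by rewrite /Vset /=; apply/andP; split; lra.
    by have -> : a + (l2 - l1) - l2 = a - l1 by ring.
  by rewrite ler_nat; apply: q_monoL => //; lra.
apply: (@le_trans _ _ (qloss x n T)%:R).
  apply: p_le_q; first exact: TVs.
  rewrite ger0_norm; last lra.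
  have := ler_norm (a - l1); lra.
by rewrite (qT xs) ler0n.
Qed.

Lemma p_monoR l1 l2 : Vset m l2 -> l1 <= l2 -> T <= l1 -> p l1 <= p l2.
Proof.
move=> Vl2 l12 Tl1.
apply: lb_le_inf; first exact: E_ne.
move=> _ [a [Va Wa] <-].
have /andP[a1 a2] := Va.
have [T1 T2] := TV xV.
case: (lerP T (a - (l2 - l1))) => hT.
  apply: (@le_trans _ _ (qloss x n (a - (l2 - l1)))%:R).
    apply: p_le_q.
      by rewrite /Vset /=; apply/andP; split; lra.
    by have -> : a - (l2 - l1) - l1 = a - l2 by ring.
  by rewrite ler_nat; apply: (q_monoR xs) => //; lra.
apply: (@le_trans _ _ (qloss x n T)%:R).
  apply: p_le_q; first exact: TVs.
  rewrite ler0_norm; last lra.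
  have := ler_norm (l2 - a); rewrite distrC; lra.
by rewrite (qT xs) ler0n.
Qed.
End P.
Section Fair.
Variable R : realType.

Lemma FAIR_le (x : nat -> R) n l : FAIR x n l <= `|l - Tmed x n|.
Proof.
rewrite /FAIR; apply: (big_ind (fun v => v <= `|l - Tmed x n|)) => //.
  by move=> u v hu hv; rewrite ge_max hu hv.
move=> i _; have := ler_distD (Tmed x n) (x i) l.
have : `|x i - Tmed x n| + `|Tmed x n - l| = `|x i - Tmed x n| + `|l - Tmed x n|
  by rewrite (distrC (Tmed x n)).
move=> ->; lra.
Qed.

Lemma measurable_bigmax (r : seq nat) (F : nat -> R -> R) :
  (forall i, measurable_fun setT (F i)) ->
  measurable_fun setT (fun l => \big[Num.max/0]_(i <- r) F i l).
Proof.
move=> mF; elim: r => [|a r IH].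
  rewrite (_ : (fun l => _) = cst 0); first exact: measurable_cst.
  by apply/funext => l; rewrite big_nil.
rewrite (_ : (fun l => _) = (F a) \max (fun l => \big[Num.max/0]_(i <- r) F i l)).
  exact: measurable_maxr.
by apply/funext => l; rewrite big_cons.
Qed.

Lemma FAIR_measurable (x : nat -> R) n : measurable_fun setT (FAIR x n).
Proof.
apply: measurable_bigmax => i.
apply: measurable_funB => //.
apply: measurableT_comp => //.
apply: measurable_funB => //.
Qed.
End Fair.
Section FTC.
Variable R : realType.

Lemma int_expR (A c a b : R) : c != 0 -> a < b ->
  (\int[lebesgue_measure]_(x in `[a, b]) (A * expR (c * x))%:E =
   ((A * expR (c * b) - A * expR (c * a)) / c)%:E)%E.
Proof.
move=> c0 ab.
pose F x := A * expR (c * x) / c.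
have cf : continuous (fun x : R => A * expR (c * x)).
  move=> z; apply: (@continuousM _ R^o (fun=> A) (fun x => expR (c * x))).
    exact: cst_continuous.
  apply: continuous_comp; last exact: continuous_expR.
  by apply: (@continuousM _ R^o (fun=> c) id) => //; exact: cst_continuous.
have cF : continuous F.
  move=> z; apply: (@continuousM _ R^o (fun x => A * expR (c * x)) (fun=> c^-1)) => //.
  exact: cf. exact: cst_continuous.
have dF : forall z : R, is_derive (z : R^o) (1 : R^o) F (A * expR (c * z)).
  move=> z; rewrite /F.
  apply: is_derive_eq.
  rewrite scaler0 add0r /GRing.scale /= mulr1.
  by field.
rewrite (_ : ((A * expR (c * b) - A * expR (c * a)) / c)%:E = (F b)%:E - (F a)%:E)%E;
  last by rewrite -EFinB /F mulrBl.
apply: continuous_FTC2 ab _ _ _.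
- exact: continuous_subspaceT.
- split.
  + by move=> z _; case: (dF z).
  + by apply: cvg_at_right_filter; exact: cF.
  + by apply: cvg_at_left_filter; exact: cF.
- by move=> z _; rewrite derive1E; case: (dF z).
Qed.
End FTC.
Section Meas.
Variable R : realType.
Variables (m alpha eps : R) (x : nat -> R) (h : nat).
Let n := h.*2.+1.
Hypothesis xV : data_in_V m x n.
Hypothesis xs : sorted_data x n.
Hypothesis xC : CTM x n.
Hypothesis m0 : 0 < m.
Hypothesis al0 : 0 <= alpha.
Hypothesis eps0 : 0 <= eps.
Local Notation T := (x h.+1).
Local Notation p := (ploss m alpha x n).
Local Notation w := (expmed_weight m eps alpha x n).

Lemma w_le l1 l2 : p l2 <= p l1 -> w l1 <= w l2.
Proof.
move=> hp; rewrite /expmed_weight ler_expR !mulNr lerN2.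
by apply: ler_wpM2l => //; exact: divr_ge0.
Qed.

Lemma VsetE : Vset m = `[- (m / 2), T]%classic `|` `[T, m / 2]%classic.
Proof.
have [T1 T2] := TV xV.
apply/seteqP; split => l /=; rewrite /Vset /= !in_itv /=.
  by move=> /andP[l1 l2]; case: (lerP l T) => lT; [left|right]; apply/andP; split => //; lra.
by case=> /andP[l1 l2]; apply/andP; split; lra.
Qed.

Lemma w_meas : measurable_fun (Vset m) w.
Proof.
have [T1 T2] := TV xV.
rewrite VsetE; apply/measurable_funU => //; split.
- pose cl l := Num.max (- (m / 2)) (Num.min l T).
  have clV l : Vset m (cl l).
    rewrite /Vset /= /cl; apply/andP; split.
      by rewrite le_max lexx.
    by rewrite ge_max; apply/andP; split; [lra | rewrite ge_min; apply/orP; right].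
  have clT l : cl l <= T by rewrite /cl ge_max ge_min lexx orbT andbT; lra.
  apply: (eq_measurable_fun (w \o cl)).
    move=> l; rewrite inE /= in_itv /= => /andP[l1 l2].
    by rewrite /= /cl (min_idPl l2) (max_idPr l1).
  apply: nondecreasing_measurable => // l1 l2 l12 /=.
  apply: w_le; apply: p_monoL => //.
  by rewrite /cl; apply: le_max2 => //; apply: le_min2.
- pose cr l := Num.min (m / 2) (Num.max l T).
  have crV l : Vset m (cr l).
    rewrite /Vset /= /cr; apply/andP; split.
      by rewrite le_min; apply/andP; split; [lra | rewrite le_max; apply/orP; right; lra].
    by rewrite ge_min lexx.
  have crT l : T <= cr l by rewrite /cr le_min le_max lexx orbT andbT; lra.
  apply: (eq_measurable_fun (w \o cr)).
    move=> l; rewrite inE /= in_itv /= => /andP[l1 l2].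
    by rewrite /= /cr (max_idPl l1) (min_idPr l2).
  apply: nonincreasing_measurable => // l1 l2 l12 /=.
  apply: w_le; apply: p_monoR => //.
  by rewrite /cr; apply: le_min2 => //; apply: le_max2.
Qed.
End Meas.
Lemma mu_cc (R : realType) (a b : R) : a <= b ->
  lebesgue_measure (`[a, b]%classic : set R) = (b - a)%:E.
Proof.
rewrite le_eqVlt => /orP[/eqP ->|ab].
  by rewrite set_itv1 lebesgue_measure_set1 subrr.
by rewrite lebesgue_measure_itv /= lte_fin ab -EFinD.
Qed.
Lemma VsetI (R : realType) (m : R) : Vset m = `[- (m / 2), m / 2]%classic.
Proof. by apply/seteqP; split => l /=; rewrite /Vset /= in_itv. Qed.

Theorem theorem7p12 (R : realType) :
  exists C C' : R, 0 < C /\ 0 < C' /\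
  forall (m beta eps : R) (n : nat) (x : nat -> R),
    0 < m -> 0 < beta < 1 / 3 -> 0 < eps < 1 -> odd n ->
    C * ln (1 / beta) <= n%:R * eps ->
    data_in_V m x n -> sorted_data x n -> CTM x n ->
    let alpha := 1 / (n%:R * eps) in
    1 - beta <=
      DPExpMed_prob m eps alpha x n
        [set l | FAIR x n l <= C' * (m / (n%:R * eps)) * ln (1 / beta)].
Proof.
exists 3, 24; split; first lra.
split; first lra.
move=> m beta eps n x m0 /andP[b0 b3] /andP[e0 e1] nodd hC xV xs xC.
cbv zeta.
have [h hn] : exists h, n = h.*2.+1.
  by exists n./2; rewrite -[n in LHS]odd_double_half nodd add1n.
subst n.
set N := (h.*2.+1)%:R * eps.
set L := ln (1 / beta).
have eL : expR (- L) = beta.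
  rewrite expRN /L lnK; first by rewrite div1r invrK.
  by rewrite posrE divr_gt0.
have b3' : 3 * beta < 1 by rewrite mulrC -ltr_pdivlMr.
have L23 : 2 < 3 * L.
  have := expR_ge1Dx (- L); rewrite eL => H; lra.
have hC' : 3 * L <= N by exact: hC.
have N2 : 2 <= N by lra.
have h1 : (1 <= h)%N.
  case: (posnP h) => // h0.
  by move: N2; rewrite /N h0 /= mul1r => H; lra.
have hR1 : 1 <= h%:R :> R by rewrite ler1n.
have eN : N = (2 * h%:R + 1) * eps by rewrite /N -addn1 -muln2 natrD natrM; ring.
set alpha := 1 / N.
have N0 : 0 < N by lra.
have al0 : 0 <= alpha by rewrite /alpha divr_ge0 // ltW.
set A0 := alpha * m.
have A0N : A0 * N = m by rewrite /A0 /alpha; field; rewrite gt_eqF.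
have A0pos : 0 < A0 by rewrite /A0 mulr_gt0 // /alpha divr_gt0.
have A0m : A0 * 2 <= m by nra.
set Tm := x h.+1.
set c := eps * h%:R / (2 * m).
have c0 : 0 < c by rewrite /c divr_gt0 ?mulr_gt0 // ?ltr0n // (lt_le_trans ltr01 hR1).
have cA : c * A0 * (4 * h%:R + 2) = h%:R.
  have -> : A0 = m / N by rewrite -A0N mulfK ?gt_eqF.
  rewrite /c eN; field.
  by rewrite !gt_eqF //; nra.
have cA1 : 1 <= 6 * (c * A0) by nra.
have cA4 : 4 * (c * A0) <= 1 by nra.
set t := 24 * (m / N) * L.
have te : t = 24 * A0 * L by rewrite /t -A0N mulfK ?gt_eqF.
have t0 : 0 < t by rewrite te; nra.
have ct : 4 * L <= c * t by rewrite te; nra.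
set w := expmed_weight m eps alpha x h.*2.+1.
set V := Vset m.
set S := [set l | FAIR x h.*2.+1 l <= t].
have mV : measurable V by rewrite /V VsetI; exact: measurable_itv.
have mS : measurable S.
  have := FAIR_measurable x h.*2.+1 measurableT (measurable_itv `]-oo, t]).
  rewrite setTI; congr measurable; apply/seteqP; split => l /=; rewrite in_itv //=.
have mfV : measurable_fun V (EFin \o w).
  by apply/measurable_EFinP; apply: w_meas => //; exact: ltW.
have w0 : forall l, 0 <= w l by move=> l; exact: expR_ge0.
have w1 : forall l, V l -> w l <= 1.
  move=> l Vl; rewrite /w /expmed_weight expR_le1 mulNr oppr_le0.
  by apply: mulr_ge0; [rewrite divr_ge0 // ltW | exact: p_ge0].
pose mu := (@lebesgue_measure R).
have mVS : measurable (V `&` S) by apply: measurableI.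
have mVnS : measurable (V `&` ~` S) by apply: measurableI => //; exact: measurableC.
have eVU : V = (V `&` S) `|` (V `&` ~` S) by rewrite -setIUr setUv setIT.
have split : (\int[mu]_(l in V) (w l)%:E =
    \int[mu]_(l in V `&` S) (w l)%:E + \int[mu]_(l in V `&` ~` S) (w l)%:E)%E.
  rewrite -ge0_integral_setU //; first by rewrite -eVU.
  - by rewrite -eVU.
  - by move=> l _; rewrite lee_fin.
  - by apply/disj_setPS => l [[_ Sl] [_ nSl]]; exact: nSl Sl.
have IVle : (\int[mu]_(l in V) (w l)%:E <= m%:E)%E.
  apply: (@le_trans _ _ (\int[mu]_(l in V) (cst 1%:E l))%E).
    apply: (ge0_le_integral mu mV (f2 := cst 1%:E)).
    - by move=> l _; rewrite lee_fin.
    - exact: mfV.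
    - exact: measurable_cst.
    - by move=> l Vl; rewrite lee_fin; exact: w1.
  rewrite integral_cst // mul1e /V VsetI.
  rewrite le_eqVlt; apply/orP; left; apply/eqP.
  apply: eq_trans; first by apply: mu_cc; lra.
  by rewrite opprK -splitr.
have IS0 : (0 <= \int[mu]_(l in V `&` S) (w l)%:E)%E.
  by apply: integral_ge0 => l _; rewrite lee_fin.
have IB0 : (0 <= \int[mu]_(l in V `&` ~` S) (w l)%:E)%E.
  by apply: integral_ge0 => l _; rewrite lee_fin.
have finV : (\int[mu]_(l in V) (w l)%:E)%E \is a fin_num.
  rewrite ge0_fin_numE; first exact: (le_lt_trans IVle (ltry _)).
  by rewrite split adde_ge0.
have finS : (\int[mu]_(l in V `&` S) (w l)%:E)%E \is a fin_num.
  rewrite ge0_fin_numE //; apply: (le_lt_trans _ (ltry m)).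
  by apply: le_trans IVle; rewrite split leeDl.
have finB : (\int[mu]_(l in V `&` ~` S) (w l)%:E)%E \is a fin_num.
  rewrite ge0_fin_numE //; apply: (le_lt_trans _ (ltry m)).
  by apply: le_trans IVle; rewrite split leeDr.
rewrite /DPExpMed_prob /Rintegral -/mu -/V.
set B := fine (\int[mu]_(l in V) (w l)%:E)%E.
set G := fine (\int[mu]_(l in V `&` S) (w l)%:E)%E.
set Bd := fine (\int[mu]_(l in V `&` ~` S) (w l)%:E)%E.
have BGB : B = G + Bd by rewrite /B split fineD.
have [T1 T2] : - (m / 2) <= Tm /\ Tm <= m / 2 := TV xV.
have Blow : A0 <= B.
  rewrite -lee_fin /B fineK //.
  have key : forall a, `[a, a + A0]%classic `<=` V ->
      (forall l, a <= l <= a + A0 -> `|Tm - l| <= A0) ->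
      (A0%:E <= \int[mu]_(l in V) (w l)%:E)%E.
    move=> a JV Jc.
    have mJ : measurable (`[a, a + A0]%classic : set R) by exact: measurable_itv.
    have H1 : (\int[mu]_(l in `[a, (a + A0)%R]%classic) (w l)%:E <= \int[mu]_(l in V) (w l)%:E)%E.
      apply: (ge0_subset_integral mu mJ mV) => //.
      by move=> l _; rewrite lee_fin.
    apply: le_trans H1.
    rewrite (eq_integral (cst 1%:E)); last first.
      move=> l; rewrite inE /= in_itv /= => hl.
      by rewrite /w /expmed_weight (p_zero xV xs (Jc l hl)) mulr0 expR0.
    rewrite integral_cst // mul1e le_eqVlt; apply/orP; left; apply/eqP; apply/esym.
    apply: eq_trans; first by apply: mu_cc; lra.
    by congr EFin; ring.
  case: (lerP Tm 0) => hT.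
    apply: (key Tm).
      by move=> l /=; rewrite in_itv /= => /andP[l1 l2]; rewrite /V /Vset /=; apply/andP; split; lra.
    by move=> l /andP[l1 l2]; rewrite ler_norml; apply/andP; split; lra.
  apply: (key (Tm - A0)).
    by move=> l /=; rewrite in_itv /= => /andP[l1 l2]; rewrite /V /Vset /=; apply/andP; split; lra.
  by move=> l /andP[l1 l2]; rewrite ler_norml; apply/andP; split; lra.
have Bdup : Bd <= 2 * expR (c * A0 - c * t) / c.
  rewrite -lee_fin /Bd fineK //.
  set E := expR (c * A0 - c * t).
  pose g l := expR (- c * (`|l - Tm| - A0)).
  have mg : measurable_fun setT g.
    have -> : g = expR \o ((fun y => - c * y) \o ((fun y => y - A0) \o
        (Num.norm \o (fun l => l - Tm)))) by [].
    apply: measurableT_comp; first exact: measurable_expR.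
    apply: measurableT_comp; first exact: mulrl_measurable.
    apply: measurableT_comp; first by apply: measurable_funB.
    apply: measurableT_comp; first exact: normr_measurable.
    by apply: measurable_funB.
  have mgE : forall D, measurable_fun D (EFin \o g).
    by move=> D; apply/measurable_EFinP; exact: measurable_funTS.
  have g0 : forall l, 0 <= g l by move=> l; exact: expR_ge0.
  set Rt := `[Tm + t, Tm + t + m]%classic.
  set Lt := `[Tm - t - m, Tm - t]%classic.
  have mRt : measurable Rt by exact: measurable_itv.
  have mLt : measurable Lt by exact: measurable_itv.
  have Step1 : (\int[mu]_(l in V `&` ~` S) (w l)%:E <= \int[mu]_(l in V `&` ~` S) (g l)%:E)%E.
    apply: (ge0_le_integral mu mVnS).
    - by move=> l _; rewrite lee_fin.
    - exact: (measurable_funS mV _ mfV).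
    - exact: mgE.
    move=> l [Vl _]; rewrite lee_fin /w /expmed_weight /g ler_expR.
    have := p_lower xV xs xC m0 al0 Vl.
    rewrite -/A0 -/Tm => H.
    have e2 : 0 <= eps / 2 by rewrite divr_ge0 // ltW.
    have : eps / 2 * (h%:R * (`|l - Tm| - A0) / m) <= eps / 2 * ploss m alpha x h.*2.+1 l.
      by apply: ler_wpM2l.
    have -> : eps / 2 * (h%:R * (`|l - Tm| - A0) / m) = c * (`|l - Tm| - A0).
      by rewrite /c; field; rewrite gt_eqF.
    rewrite !mulNr; lra.
  have Step2 : (\int[mu]_(l in V `&` ~` S) (g l)%:E <= \int[mu]_(l in Rt `|` Lt) (g l)%:E)%E.
    have mRL : measurable (Rt `|` Lt) by exact: measurableU.
    apply: (ge0_subset_integral mu mVnS mRL) => //.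
    - exact: mgE.
    - by move=> l _; rewrite lee_fin.
    move=> l [Vl nSl].
    have hF : t < `|l - Tm|.
      have := FAIR_le x h.*2.+1 l; rewrite /Tmed midxE -/Tm => H.
      have : ~ (FAIR x h.*2.+1 l <= t) by exact: nSl.
      move/negP; rewrite -ltNge => H2; lra.
    move: Vl; rewrite /V /Vset /= => /andP[l1 l2].
    case: (lerP Tm l) => hl.
      have hF' : t < l - Tm by rewrite -(ger0_norm (x := l - Tm)) // subr_ge0.
      by left; rewrite /Rt /= in_itv /=; apply/andP; split; lra.
    have hF' : t < Tm - l by rewrite -opprB -(ltr0_norm (x := l - Tm)) // subr_lt0.
    by right; rewrite /Lt /= in_itv /=; apply/andP; split; lra.
  have Step3 : (\int[mu]_(l in Rt `|` Lt) (g l)%:E = \int[mu]_(l in Rt) (g l)%:E + \int[mu]_(l in Lt) (g l)%:E)%E.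
    apply: ge0_integral_setU => //.
    - exact: mgE.
    - by move=> l _; rewrite lee_fin.
    apply/disj_setPS => l [].
    by rewrite /Rt /Lt /= !in_itv /= => /andP[a1 a2] /andP[b1 b2]; lra.
  have Step4 : (\int[mu]_(l in Rt) (g l)%:E <= (E / c)%:E)%E.
    have -> : (\int[mu]_(l in Rt) (g l)%:E =
        \int[mu]_(l in Rt) (expR (c * A0 + c * Tm) * expR (- c * l))%:E)%E.
      apply: eq_integral => l; rewrite inE /Rt /= in_itv /= => /andP[l1 l2].
      rewrite /g -expRD ger0_norm; last lra.
      by congr (EFin (expR _)); ring.
    rewrite int_expR; first last.
    - lra.
    - by rewrite oppr_eq0 gt_eqF.
    rewrite lee_fin.
    have eE : expR (c * A0 + c * Tm) * expR (- c * (Tm + t)) = E.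
      by rewrite -expRD /E; congr expR; ring.
    rewrite eE.
    have v0 : 0 <= expR (c * A0 + c * Tm) * expR (- c * (Tm + t + m)).
      by apply: mulr_ge0; exact: expR_ge0.
    set X := expR (c * A0 + c * Tm) * expR (- c * (Tm + t + m)) in v0 *.
    have -> : (X - E) / (- c) = (E - X) / c.
      by field; rewrite gt_eqF.
    by apply: ler_wpM2r; [rewrite invr_ge0 ltW | lra].
  have Step5 : (\int[mu]_(l in Lt) (g l)%:E <= (E / c)%:E)%E.
    have -> : (\int[mu]_(l in Lt) (g l)%:E =
        \int[mu]_(l in Lt) (expR (c * A0 - c * Tm) * expR (c * l))%:E)%E.
      apply: eq_integral => l; rewrite inE /Lt /= in_itv /= => /andP[l1 l2].
      rewrite /g -expRD ltr0_norm; last lra.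
      by congr (EFin (expR _)); ring.
    rewrite int_expR; first last.
    - lra.
    - by rewrite gt_eqF.
    rewrite lee_fin.
    have eE : expR (c * A0 - c * Tm) * expR (c * (Tm - t)) = E.
      by rewrite -expRD /E; congr expR; ring.
    rewrite eE.
    have v0 : 0 <= expR (c * A0 - c * Tm) * expR (c * (Tm - t - m)).
      by apply: mulr_ge0; exact: expR_ge0.
    by apply: ler_wpM2r; [rewrite invr_ge0 ltW | lra].
  apply: (le_trans Step1); apply: (le_trans Step2); rewrite Step3.
  have -> : 2 * E / c = E / c + E / c by ring.
  by rewrite EFinD; apply: leeD.
set K := expR (c * A0).
have K0 : 0 < K by exact: expR_gt0.
have K43 : 3 * K <= 4.
  have H1 := expR_ge1Dx (- (c * A0)).
  have H2 : K * expR (- (c * A0)) = 1 by rewrite /K expRxMexpNx_1.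
  nra.
have Eb : expR (c * A0 - c * t) <= K * beta ^+ 4.
  rewrite expRD /K; apply: ler_wpM2l; first exact: expR_ge0.
  rewrite -eL -expRM_natl ler_expR; lra.
have b4 : 27 * beta ^+ 4 <= beta.
  have h3 : (3 * beta) ^+ 3 <= 1 by apply: exprn_ile1; lra.
  have -> : 27 * beta ^+ 4 = beta * (3 * beta) ^+ 3 by rewrite exprMn; ring.
  by rewrite -[leRHS]mulr1; apply: ler_wpM2l => //; exact: ltW.
set ic := c^-1.
have cic : c * ic = 1 by rewrite /ic mulfV ?gt_eqF.
have ic0 : 0 < ic by rewrite /ic invr_gt0.
have ic6 : ic <= 6 * A0 by nra.
have Bdb : Bd <= beta * A0.
  have : Bd <= 2 * (K * beta ^+ 4) * ic.
    apply: (le_trans Bdup); rewrite -/ic; apply: ler_wpM2r; first exact: ltW.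
    by apply: ler_wpM2l => //.
  have b40 : 0 <= beta ^+ 4 by apply: exprn_ge0; exact: ltW.
  set b4' := beta ^+ 4 in b4 b40 *.
  have P0 : 0 <= K * b4' by apply: mulr_ge0 => //; exact: ltW.
  have s1 : 2 * (K * b4') * ic <= 2 * (K * b4') * (6 * A0).
    by apply: ler_wpM2l => //; lra.
  have s2 : 3 * (K * b4') <= 4 * b4' by nra.
  have s3 : (K * b4') * A0 <= b4' * A0 * (4 / 3) by nra.
  have s4 : b4' * A0 * 27 <= beta * A0 by nra.
  move=> H; apply: (le_trans H); apply: (le_trans s1).
  have -> : 2 * (K * b4') * (6 * A0) = 12 * ((K * b4') * A0) by ring.
  nra.
have B0 : 0 < B by lra.
rewrite ler_pdivlMr //.
nra.
Qed.
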